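(* Let $k,l$ be positive integers and $G_{k,l}(T):=1-T+T^{lk+1}-T^{k(l+1)}\in\mathbb{C}[T]$. Then $G_{k,l}(T)$ is unitary if and only if $k\in\{1,2\}$.
   Context: A polynomial $f(T)\in 1+T\cdot\mathbb{C}[T]$ is called unitary if there is a unitary matrix $M$ (of some size) such that $f(T)=\det(I-MT)$; equivalently $f(T)=\prod_i(1-\alpha_iT)$ with all $|\alpha_i|=1$. *)

(* Defs.v *)
From HB Require Import structures.
From mathcomp Require Import all_boot all_order all_algebra complex.
From mathcomp Require Import Rstruct.
Set Implicit Arguments. Unset Strict Implicit. Unset Printing Implicit Defensive.
Import Order.TTheory GRing.Theory Num.Theory.
Local Open Scope ring_scope.

Definition C : numClosedFieldType := (Rdefinitions.R)[i].

Definition unitary_mx (n : nat) (M : 'M[C]_n) : Prop :=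
  M *m (map_mx Num.conj M)^T = 1%:M.

Definition det_one_minus (n : nat) (M : 'M[C]_n) : {poly C} :=
  \det (1%:M - map_mx polyC M *m ('X)%:M).

Definition unitary_poly (f : {poly C}) : Prop :=
  exists (n : nat) (M : 'M[C]_n), unitary_mx M /\ f = det_one_minus M.

Definition G_poly (k l : nat) : {poly C} :=
  1 - 'X + 'X^(l * k + 1) - 'X^(k * (l + 1)).

(* Main.v *)
Require Import Defs.
From mathcomp Require Import all_boot all_order all_algebra complex zify ring.
Set Implicit Arguments. Unset Strict Implicit. Unset Printing Implicit Defensive.
Import Order.TTheory GRing.Theory Num.Theory.
Local Open Scope ring_scope.

Lemma det_one_minus_eval n (M : 'M[C]_n) (z : C) :
  (det_one_minus M).[z] = \det (1%:M - z *: M).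
Proof.
rewrite -horner_evalE /det_one_minus -det_map_mx mul_mx_scalar.
congr (\det _); apply/matrixP => i j.
rewrite !mxE rmorphB rmorph_nat /= horner_evalE hornerM hornerX hornerC mulrC.
by [].
Qed.

Lemma det_conjT n (w : C) (M : 'M[C]_n) :
  \det (1%:M - w *: (map_mx Num.conj M)^T) = (\det (1%:M - w^* *: M))^*.
Proof.
rewrite -det_map_mx -det_tr; congr (\det _).
apply/matrixP => i j; rewrite !mxE rmorphB rmorphM /= conjCK rmorph_nat.
by rewrite eq_sym.
Qed.

Lemma key n (M : 'M[C]_n) (z : C) : unitary_mx M -> z != 0 ->
  \det (1%:M - z *: M) = (- z) ^+ n * \det M * (\det (1%:M - (z^-1)^* *: M))^*.
Proof.
move=> hU hz; rewrite -det_conjT -mulrA -det_mulmx -detZ; congr (\det _).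
rewrite mulmxBr mulmx1 -scalemxAr hU scalerBr scalerA mulNr divff //.
by rewrite scaleN1r opprK scaleNr -scalemx1 addrC.
Qed.

Lemma G_coef k l j : (G_poly k l)`_j =
  (j == 0)%:R - (j == 1)%:R + (j == l * k + 1)%:R - (j == k * (l + 1))%:R :> C.
Proof. by rewrite /G_poly !coefE. Qed.

Lemma G_horner k l (z : C) : (G_poly k l).[z] = 1 - z + z ^+ (l * k + 1) - z ^+ (k * (l + 1)).
Proof. by rewrite /G_poly !hornerE. Qed.

Lemma G_conj k l (w : C) : ((G_poly k l).[w^*])^* = (G_poly k l).[w].
Proof. by rewrite !G_horner !(rmorphB, rmorphD, rmorph1, rmorphXn) /= conjCK. Qed.

Lemma poly_eq0_nonzero (Q : {poly C}) : (forall z : C, z != 0 -> Q.[z] = 0) -> Q = 0.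
Proof.
move=> H; apply: (@roots_geq_poly_eq0 _ Q [seq (i.+1)%:R | i <- iota 0 (size Q)]).
- apply/allP => x /mapP [i _ ->]; apply/eqP/H; by rewrite pnatr_eq0.
- rewrite map_inj_uniq ?iota_uniq // => i j /eqP; rewrite eqr_nat => /eqP; case.
  by [].
- by rewrite size_map size_iota.
Qed.

Definition Gs (k l : nat) : {poly C} :=
  -1 + 'X^(k - 1)%N - 'X^(k * (l + 1) - 1)%N + 'X^(k * (l + 1)).

Lemma Gs_horner k l (z : C) : (0 < k)%N -> z != 0 ->
  z ^+ (k * (l + 1)) * (G_poly k l).[z^-1] = (Gs k l).[z].
Proof.
move=> hk hz; rewrite G_horner /Gs !hornerE.
have e1 : (k * (l + 1) = (k * (l + 1) - 1).+1)%N by lia.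
have e2 : (k * (l + 1) = (k - 1) + (l * k + 1))%N by lia.
rewrite !mulrDr !mulrN mulr1 !exprVn.
have hu : z ^+ (l * k + 1) != 0 by rewrite expf_neq0.
have hm : z ^+ (k * (l + 1)) != 0 by rewrite expf_neq0.
rewrite divff //.
rewrite [in X in X / z]e1 exprSr mulfK //.
rewrite [in X in X / z ^+ (l * k + 1)]e2 exprD mulfK //.
by ring.
Qed.

Lemma Gs_coef k l j : (Gs k l)`_j =
  - (j == 0)%:R + (j == k - 1)%N%:R - (j == k * (l + 1) - 1)%N%:R + (j == k * (l + 1))%:R :> C.
Proof. by rewrite /Gs !coefE. Qed.

Lemma not_unitary k l : (2 < k)%N -> (0 < l)%N -> ~ unitary_poly (G_poly k l).
Proof.
move=> hk hl [n [M [hU hG]]].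
have hd : \det M != 0.
  apply/eqP => d0; move: (congr1 determinant hU).
  by rewrite det_mulmx d0 mul0r det1 => /eqP; rewrite eq_sym oner_eq0.
set d := \det M in hd.
pose c : C := (-1) ^+ n * d.
have hc : c != 0 by rewrite mulf_neq0 // expf_neq0 // oppr_eq0 oner_eq0.
have hQ : 'X^(k * (l + 1)) * G_poly k l = c *: ('X^n * Gs k l).
  apply/eqP; rewrite -subr_eq0; apply/eqP/poly_eq0_nonzero => z hz.
  rewrite hornerD hornerN hornerZ !hornerM !hornerXn.
  have -> : (G_poly k l).[z] = (-z)^+n * d * (G_poly k l).[z^-1].
    by rewrite hG det_one_minus_eval key // -det_one_minus_eval -hG G_conj.
  rewrite -Gs_horner //; last by lia.
  rewrite /c [(- z) ^+ n]exprNn; ring.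
have hco i : ('X^(k * (l + 1)) * G_poly k l)`_i = c * ('X^n * Gs k l)`_i by rewrite hQ coefZ.
have hm : (0 < k * (l + 1))%N by lia.
have := hco (k * (l + 1))%N; rewrite !coefXnM ltnn subnn G_coef.
have -> : (0 == l * k + 1)%N = false by lia.
have -> : (0 == k * (l + 1))%N = false by lia.
rewrite eqxx (_ : (0 == 1)%N = false) // !mulr0n mulr1n subr0 addr0 subr0.
case: ltnP => hmn; first by rewrite mulr0; move/eqP; rewrite oner_eq0.
move=> _.
have := hco n; rewrite !coefXnM ltnn subnn Gs_coef.
have -> : (0 == k - 1)%N = false by lia.
have -> : (0 == k * (l + 1) - 1)%N = false by lia.
have -> : (0 == k * (l + 1))%N = false by lia.
rewrite eqxx !mulr0n mulr1n subr0 !addr0 mulrN1.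
case: ltnP => hnm.
  by move=> h; move: hc; rewrite -oppr_eq0 -h eqxx.
move=> _.
have en : n = (k * (l + 1))%N by lia.
have := hco (k * (l + 1)).+1; rewrite !coefXnM en (_ : ((k * (l + 1)).+1 < k * (l + 1))%N = false); last by lia.
rewrite G_coef Gs_coef.
have -> : ((k * (l + 1)).+1 - k * (l + 1) = 1)%N by lia.
have -> : (1 == l * k + 1)%N = false by lia.
have -> : (1 == k * (l + 1))%N = false by lia.
have -> : (1 == k - 1)%N = false by lia.
have -> : (1 == k * (l + 1) - 1)%N = false by lia.
rewrite (_ : (1 == 0)%N = false) // eqxx !mulr0n mulr1n !(sub0r, subr0, addr0, add0r, oppr0, mulr0).
by move/eqP; rewrite oppr_eq0 oner_eq0.
Qed.

Lemma unitary_diag n (a : 'I_n -> C) : (forall i, a i * (a i)^* = 1) ->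
  unitary_poly (\prod_(i < n) (1 - (a i)%:P * 'X)).
Proof.
move=> ha; exists n, (diag_mx (\row_i a i)); split.
  rewrite /unitary_mx map_diag_mx tr_diag_mx mulmx_diag -diag_const_mx.
  by congr diag_mx; apply/matrixP => i j; rewrite !mxE ha.
rewrite /det_one_minus mul_mx_scalar.
rewrite (_ : _ - _ = diag_mx (\row_i (1 - (a i)%:P * 'X))) ?det_diag.
  by apply: eq_bigr => i _; rewrite mxE.
apply/matrixP => i j; rewrite !mxE.
case: eqP => [->|_]; first by rewrite !mulr1n mulrC.
by rewrite !mulr0n polyC0 mulr0 subr0.
Qed.

Lemma unitary_of_roots (f : {poly C}) : f.[0] = 1 ->
  (forall z, root f z -> `|z| = 1) -> unitary_poly f.
Proof.
move=> f0 hr.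
have [rs hf] := closed_field_poly_normal f.
have fn0 : f != 0 by apply: contra_eqN f0 => /eqP ->; rewrite horner0 eq_sym oner_eq0.
have ln0 : lead_coef f != 0 by rewrite lead_coef_eq0.
have hrs z : z \in rs -> `|z| = 1.
  by move=> zr; apply: hr; rewrite hf rootZ // root_prod_XsubC.
have hz z : z \in rs -> z != 0.
  by move=> /hrs h; apply/eqP => z0; move: h; rewrite z0 normr0 => /eqP; rewrite eq_sym oner_eq0.
have -> : f = \prod_(z <- rs) (1 - (z^-1)%:P * 'X).
  have -> : \prod_(z <- rs) (1 - (z^-1)%:P * 'X) = \prod_(z <- rs) ((- z^-1) *: ('X - z%:P)).
    rewrite big_seq [RHS]big_seq; apply: eq_bigr => z /hz zn0.
    rewrite -mul_polyC mulrBr -polyCM mulNr mulVf // !polyCN polyC1 opprK mulNr addrC.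
    by [].
  rewrite scaler_prod {1}hf; congr (_ *: _).
  move: f0; rewrite {1}hf hornerZ horner_prod.
  under eq_bigr do rewrite hornerXsubC add0r.
  move=> h.
  have pn0 : \prod_(z <- rs) (- z) != 0.
    by apply/eqP => p0; move: h; rewrite p0 mulr0 => /eqP; rewrite eq_sym oner_eq0.
  rewrite -(mulfK pn0 (lead_coef f)) h mul1r -prodfV.
  by apply: eq_bigr => z _; rewrite invrN.
rewrite (big_nth 0) big_mkord.
apply: unitary_diag => i.
have hin : rs`_i \in rs by rewrite mem_nth.
have := hrs _ hin; move: (hz _ hin); set z := rs`_i => zn0 h1.
have : z * z^* = 1 by rewrite -normCK h1 expr1n.
move=> e; rewrite fmorphV -invfM; change ((z * z^*)^-1 = 1); by rewrite e invr1.
Qed.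

Lemma unitary_k1 l : unitary_poly (G_poly 1 l).
Proof.
apply: unitary_of_roots.
  by rewrite G_horner muln1 mul1n addrK subr0.
move=> z; rewrite /root G_horner muln1 mul1n addrK subr_eq0 => /eqP <-.
by rewrite normr1.
Qed.

Lemma unitary_k2 l : unitary_poly (G_poly 2 l).
Proof.
have hG z : (G_poly 2 l).[z] = (1 - z) * (1 + z ^+ (l * 2 + 1)).
  rewrite G_horner (_ : (2 * (l + 1) = (l * 2 + 1).+1)%N); last by lia.
  by rewrite exprS; move: (z ^+ (l * 2 + 1)) => w; ring.
apply: unitary_of_roots.
  by rewrite hG !subr0 mul1r expr0n addn1 /= addr0.
move=> z; rewrite /root hG mulf_eq0 => /orP [].
  by rewrite subr_eq0 => /eqP <-; rewrite normr1.
rewrite addrC addr_eq0 => /eqP h.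
have : `|z| ^+ (l * 2 + 1) = 1 by rewrite -normrX h normrN normr1.
by move/eqP; rewrite pexpr_eq1 // ?addn1 // => /eqP.
Qed.

Theorem proposition13 (k l : nat) (hk : (0 < k)%N) (hl : (0 < l)%N) :
  unitary_poly (G_poly k l) <-> (k = 1%N \/ k = 2%N).
Proof.
split.
  move=> hU; case: (ltnP 2 k) => hk2; first by case: (not_unitary hk2 hl hU).
  lia.
by case=> ->; [apply: unitary_k1 | apply: unitary_k2].
Qed.
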